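(* Let $S$ be a word of length $n$ and $C$ a word. If $C$ is an s-cover of $S$, then there exist positive integers $r_0,\dots,r_{n-1}$ such that the word $S[0]^{r_0}S[1]^{r_1}\cdots S[n-1]^{r_{n-1}}$ belongs to the shuffle closure $C^{\odot}$.
   Context: For words $C,S$, $C$ is an \emph{s-cover} of $S$ if for every position $i$ of $S$ there exist indices $j_0<\dots<j_{|C|-1}$ with $S[j_t]=C[t]$ for all $t$ and $i\in\{j_0,\dots,j_{|C|-1}\}$. For a letter $x$ and integer $r\ge1$, $x^r$ is $x$ repeated $r$ times. The shuffle closure $C^{\odot}$ is the set of words $W$ whose set of positions $\{0,\dots,|W|-1\}$ can be partitioned into pairwise disjoint sets, each of which is the set of positions $j_0<\dots<j_{|C|-1}$ of an occurrence of $C$ as a subsequence of $W$ (i.e., $W$ is an interleaving of copies of $C$). *)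

(* Defs.v *)
From mathcomp Require Import all_boot.
Set Implicit Arguments. Unset Strict Implicit. Unset Printing Implicit Defensive.

Section Words.
Variable T : eqType.

(* js : positions j_0 < ... < j_{|C|-1} of an occurrence of C as a
   subsequence of W (the default element x0 of nth is irrelevant since
   all indices are in range). *)
Definition occurrence (C W : seq T) (js : seq nat) : Prop :=
  [/\ size js = size C,
      sorted ltn js,
      all (fun j => j < size W) js &
      forall x0 : T, forall t, t < size C -> nth x0 W (nth 0 js t) = nth x0 C t].

Definition s_cover (C S : seq T) : Prop :=
  forall i, i < size S -> exists js, occurrence C S js /\ i \in js.

(* W belongs to the shuffle closure of C: positions of W are partitioned
   into pairwise disjoint blocks, each the position set of an occurrence
   of C.  Disjointness + covering = the concatenation of the blocks is a
   permutation of [0, ..., |W|-1]. *)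
Definition in_shuffle_closure (C W : seq T) : Prop :=
  exists P : seq (seq nat),
    (forall js, js \in P -> occurrence C W js) /\
    perm_eq (flatten P) (iota 0 (size W)).

Definition expand (S : seq T) (r : seq nat) : seq T :=
  flatten [seq nseq p.2 p.1 | p <- zip S r].

End Words.

(* Main.v *)
Require Import Defs.
From mathcomp Require Import all_boot.

Lemma choice_list (P : nat -> seq nat -> Prop) n :
  (forall i, i < n -> exists js, P i js) ->
  exists L : seq (seq nat), size L = n /\ forall i, i < n -> P i (nth [::] L i).
Proof.
elim: n => [|n IH] H; first by exists [::].
have [L [HL HP]] := IH (fun i Hi => H i (ltnW Hi)).
have [js Hjs] := H n (ltnSn n).
exists (rcons L js); split; first by rewrite size_rcons HL.
move=> i; rewrite ltnS leq_eqVlt => /orP[/eqP->|Hi].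
  by rewrite nth_rcons HL ltnn eqxx.
by rewrite nth_rcons HL Hi; apply: HP.
Qed.

Lemma map_index_uniq (T : eqType) (E : seq T) :
  uniq E -> map (index^~ E) E = iota 0 (size E).
Proof.
elim: E => [|x E IH] //= /andP[HxE HE].
rewrite eqxx /=; congr (_ :: _).
rewrite -(addn0 1) iotaDl -IH // -map_comp.
apply/eq_in_map => y Hy /=.
have -> : (x == y) = false by apply/negbTE; apply: contraNneq HxE => ->.
by rewrite add1n.
Qed.

Lemma map_constE (A B : Type) (b : B) (s : seq A) :
  map (fun _ => b) s = nseq (size s) b.
Proof. by elim: s => //= a s ->. Qed.

Lemma E_pairwise (t : nat -> seq nat) m n :
  pairwise (fun p q : nat * nat => p.1 <= q.1) [seq (k, i) | k <- iota m n, i <- t k].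
Proof.
elim: n m => [|n IH] m //=.
rewrite pairwise_cat IH andbT; apply/andP; split.
  apply/allrelP => p q /mapP[i _ ->] /allpairsPdep[k [j [Hk _ ->]]] /=.
  by move: Hk; rewrite mem_iota => /andP[/ltnW].
rewrite pairwise_map; elim: (t m) => //= a s ->; rewrite andbT.
by apply/allP => x _ /=.
Qed.
Lemma main_x0 (T : eqType) (x0 : T) (S C : seq T) :
  s_cover C S ->
  exists r : seq nat,
    [/\ size r = size S, all (fun k => 0 < k) r &
        in_shuffle_closure C (expand S r)].
Proof.
move=> Hc.
set n := size S.
have [L [HL HP]] := choice_list (fun i js => occurrence C S js /\ i \in js) n Hc.
pose Lj i := nth [::] L i.
pose F k := [seq i <- iota 0 n | k \in Lj i].
pose r := [seq size (F k) | k <- iota 0 n].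
pose E := [seq (k, i) | k <- iota 0 n, i <- F k].
pose g (p : nat * nat) := nth x0 S p.1.
have HW : expand S r = map g E.
  rewrite /expand /r -{1}(mkseq_nth x0 S) /mkseq zip_map -map_comp /E.
  rewrite map_flatten -map_comp.
  congr flatten; apply/eq_map => k /=.
  by rewrite -map_comp /g /= map_constE ?size_map.
have HPo i : i < n -> occurrence C S (Lj i) by move=> Hi; case: (HP i Hi).
have HLjn i k : i < n -> k \in Lj i -> k < n.
  move=> Hi Hk; case: (HPo i Hi) => _ _ /allP Ha _; exact: Ha.
have memE k i : ((k, i) \in E) = [&& k < n, i < n & k \in Lj i].
  apply/allpairsPdep/idP.
    move=> [k' [i' [Hk' Hi' [-> ->]]]].
    move: Hi'; rewrite mem_filter mem_iota /= => /andP[-> ->].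
    by move: Hk'; rewrite mem_iota /= => ->.
  move=> /and3P[Hk Hi Hki]; exists k, i; split => //.
    by rewrite mem_iota.
  by rewrite mem_filter Hki mem_iota.
have uniqE : uniq E.
  apply: allpairs_uniq_dep; first exact: iota_uniq.
    move=> k _; apply: filter_uniq; exact: iota_uniq.
  by move=> [k i] [k' i'] _ _ /= [-> ->].
have Huj i : i < n -> uniq (Lj i).
  move=> Hi; case: (HPo i Hi) => _ Hs _ _.
  exact: (sorted_uniq ltn_trans ltnn Hs).
pose FQ := [seq (k, i) | i <- iota 0 n, k <- Lj i].
have uniqFQ : uniq FQ.
  apply: allpairs_uniq_dep; first exact: iota_uniq.
    by move=> i; rewrite mem_iota /= => /Huj.
  by move=> [i k] [i' k'] _ _ /= [-> ->].
have memFQ : FQ =i E.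
  move=> [k i]; rewrite memE.
  apply/allpairsPdep/idP.
    move=> [i' [k' [Hi' Hk' [-> ->]]]].
    move: Hi'; rewrite mem_iota /= => Hi'; rewrite Hi' Hk' /= ?andbT.
    exact: (HLjn i').
  move=> /and3P[Hk Hi Hki]; exists i, k; split => //.
  by rewrite mem_iota.
have Hsort : sorted (fun p q : nat * nat => p.1 <= q.1) E.
  by rewrite sorted_pairwise ?E_pairwise //; move=> a b c /=; apply: leq_trans.
exists r; split.
- by rewrite size_map size_iota.
- apply/allP => x /mapP[k Hk ->].
  have : k \in F k.
    by rewrite mem_filter Hk andbT; move: Hk; rewrite mem_iota /= => /(HP k) [_ ->].
  by case: (F k).
rewrite /in_shuffle_closure [expand _ _]HW.
exists [seq [seq index (k, i) E | k <- Lj i] | i <- iota 0 n]; split.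
  move=> q /mapP[i Hi ->]; move: Hi; rewrite mem_iota /= => Hi.
  case: (HPo i Hi) => Hsz Hs Hall Hnth.
  split.
  - by rewrite size_map.
  - rewrite sorted_map; apply: (sub_in_sorted (P := [pred k | k \in Lj i])) Hs; last by apply/allP.
    move=> k k' Hk Hk' /= Hlt; rewrite inE in Hk; rewrite inE in Hk'.
    rewrite ltnNge; apply/negP => Hle.
    have HkE : (k, i) \in E by rewrite memE Hi Hk andbT (HLjn i).
    have Hk'E : (k', i) \in E by rewrite memE Hi Hk' andbT (HLjn i).
    have Htr : transitive (fun p q : nat * nat => p.1 <= q.1) by move=> ? ? ?; apply: leq_trans.
    have Hrf : reflexive (fun p q : nat * nat => p.1 <= q.1) by move=> ?; apply: leqnn.
    have := sorted_leq_index Htr Hrf Hsort (k', i) (k, i) Hk'E HkE Hle.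
    by rewrite /= leqNgt Hlt.
  - apply/allP => j /mapP[k Hk ->]; rewrite size_map index_mem memE Hk Hi /= andbT.
    exact: (HLjn i).
  - move=> x1 t Ht.
    rewrite -Hsz in Ht.
    rewrite (nth_map 0) // (nth_map (0, 0)); last first.
      by rewrite index_mem memE Hi mem_nth // andbT (HLjn i) // mem_nth.
    rewrite nth_index; last by rewrite memE Hi mem_nth // andbT (HLjn i) // mem_nth.
    rewrite /g /= -Hnth; last by rewrite -Hsz.
    apply: set_nth_default.
    by rewrite -/n (HLjn i) // mem_nth.
rewrite size_map -(@map_index_uniq _ E) //.
have H1 := perm_map (index^~ E) (uniq_perm uniqFQ uniqE memFQ).
rewrite /FQ map_allpairs in H1; exact: H1.
Qed.

Theorem mainTheorem20 (T : eqType) (S C : seq T) :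
  s_cover C S ->
  exists r : seq nat,
    [/\ size r = size S, all (fun k => 0 < k) r &
        in_shuffle_closure C (expand S r)].
Proof.
case: S => [|x0 S'] Hc.
  exists [::]; split => //; exists [::]; split => //.
have [r Hr] := @main_x0 T x0 _ _ Hc; by exists r.
Qed.
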